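(* Let $P=\{x\in\mathbb R^n : Ax=b,\ x\ge 0\}$ be a polyhedron in standard form. Then the cone $$C_A=\{(y^+,y^-)\in\mathbb R^{2n} : A(y^+-y^-)=0,\ y^+,y^-\ge 0\}$$ is pointed and is generated by a set of extreme rays $S\cup T'$, where: (1) $S:=\{(y^+,y^-) : y^+_i=\max\{g_i,0\},\ y^-_i=\max\{-g_i,0\}\ (i\le n),\ g\in\mathcal C(A)\}$ (these give the circuits of $P$); (2) $T'$ is a subset of $T:=\{(y^+,y^-) : \text{for some } i\le n,\ y^+_i=y^-_i=1,\ y^+_j=y^-_j=0\ (j\ne i)\}$ with $|T'|\le n$. That is, the extreme rays of $C_A$ are exactly the rays spanned by the elements of $S\cup T'$.
   Context: $\mathcal C(A)$ denotes the set of circuits of the standard form polyhedron: all $g\in\ker(A)\setminus\{0\}$, normalized to coprime integer components, that are support-minimal in $\ker(A)\setminus\{0\}$ (no $x\in\ker(A)\setminus\{0\}$ has $\operatorname{supp}(x)\subsetneq\operatorname{supp}(g)$). *)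

(* Defs.v *)
From HB Require Import structures.
From mathcomp Require Import all_boot all_order all_algebra.
From mathcomp Require Import reals.
Set Implicit Arguments. Unset Strict Implicit. Unset Printing Implicit Defensive.
Import Order.TTheory GRing.Theory Num.Theory.
Local Open Scope ring_scope.

Section Defs.
Variables (R : realType) (m n : nat).

Definition realmx (A : 'M[rat]_(m, n)) : 'M[R]_(m, n) := map_mx ratr A.

Definition supp (x : 'cV[R]_n) : {set 'I_n} := [set i | x i 0 != 0].

Definition intvec (g : 'cV[int]_n) : 'cV[R]_n := map_mx (fun z : int => z%:~R) g.

Definition is_circuit (A : 'M[rat]_(m, n)) (g : 'cV[int]_n) : Prop :=
  [/\ g != 0,
      realmx A *m intvec g = 0,
      (forall d : int, (forall i, (d %| g i ord0)%Z) -> `|d| = 1) &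
      (forall x : 'cV[R]_n, realmx A *m x = 0 -> x != 0 ->
         ~ (supp x \proper supp (intvec g)))].

(* the cone C_A in R^{2n}; a vector y is split as (y^+, y^-) = (usubmx y, dsubmx y) *)
Definition CA (A : 'M[rat]_(m, n)) (y : 'cV[R]_(n + n)) : Prop :=
  [/\ realmx A *m (usubmx y - dsubmx y) = 0,
      (forall i, 0 <= usubmx y i 0) &
      (forall i, 0 <= dsubmx y i 0)].

Definition pointed (C : 'cV[R]_(n + n) -> Prop) : Prop :=
  forall y, C y -> C (- y) -> y = 0.

Definition extreme_dir (C : 'cV[R]_(n + n) -> Prop) (d : 'cV[R]_(n + n)) : Prop :=
  [/\ d != 0, C d &
      forall u v, C u -> C v -> u + v = d ->
        exists a b : R, [/\ 0 <= a, 0 <= b, u = a *: d & v = b *: d]].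

Definition cone_generated_by (C G : 'cV[R]_(n + n) -> Prop) : Prop :=
  forall y, C y -> exists k (d : 'I_k -> 'cV[R]_(n + n)) (c : 'I_k -> R),
    [/\ forall j, G (d j), forall j, 0 <= c j & y = \sum_(j < k) c j *: d j].

Definition Svec (A : 'M[rat]_(m, n)) (y : 'cV[R]_(n + n)) : Prop :=
  exists g, is_circuit A g /\
    y = col_mx (\col_i Num.max (intvec g i 0) 0) (\col_i Num.max (- intvec g i 0) 0).

Definition tvec (i : 'I_n) : 'cV[R]_(n + n) :=
  col_mx (\col_j (j == i)%:R) (\col_j (j == i)%:R).

End Defs.

(* Main.v *)
Require Import Defs.
From HB Require Import structures.
From mathcomp Require Import all_boot all_order all_algebra.
From mathcomp Require Import reals lra ring.
From Stdlib Require Import Classical.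
Import Order.TTheory GRing.Theory Num.Theory.
Local Open Scope ring_scope.
Set Implicit Arguments. Unset Strict Implicit. Unset Printing Implicit Defensive.

Lemma intscale n (q : 'cV[rat]_n) : q != 0 ->
  exists (g : 'cV[int]_n) (l : rat), [/\ g != 0, l != 0,
     (forall j, (g j 0)%:~R = l * q j 0) &
     (forall d : int, (forall i, (d %| g i ord0)%Z) -> `|d| = 1)].
Proof.
case: n q => [|n] q nzq; first by rewrite flatmx0 eqxx in nzq.
pose p : {poly rat} := \poly_(k < n.+1) q (inord k) 0.
have pE (j : 'I_n.+1) : p`_j = q j 0 by rewrite coef_poly ltn_ord inord_val.
have pnz : p != 0.
  case/matrix0Pn: nzq => j [k Hj]; rewrite (ord1 k) in Hj.
  by apply/eqP => p0; move: Hj; rewrite -pE p0 coef0 eqxx.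
have [q' [a a0 Ep]] := rat_poly_scale p.
have q'nz : q' != 0.
  by apply: contraNneq pnz => q0; rewrite Ep q0 rmorph0 scaler0.
set c := zcontents q'.
have c0 : c != 0 by rewrite zcontents_eq0.
set g1 := zprimitive q'.
pose l : rat := a%:~R / c%:~R.
have l0 : l != 0 by rewrite mulf_neq0 ?invr_eq0 ?intr_eq0.
have gE k : (g1`_k)%:~R = l * p`_k.
  have key : forall x y z : rat, x != 0 -> y != 0 -> z = x / y * (x^-1 * (y * z)).
    by move=> x y z x0 y0; field; apply/andP.
  rewrite Ep coefZ coef_map /= [in RHS](zpolyEprim q') coefZ -/c -/g1 /l.
  by rewrite [(c * _)%:~R]intrM; apply: key; rewrite intr_eq0.
exists (\col_j g1`_j), l; split => //.
- case/matrix0Pn: nzq => j [k Hj]; rewrite (ord1 k) in Hj.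
  apply/matrix0Pn; exists j, 0; rewrite mxE -(intr_eq0 rat) gE pE.
  by rewrite mulf_neq0.
- by move=> j; rewrite mxE gE pE.
- move=> d Hd.
  have : (d %| zcontents g1)%Z.
    rewrite dvdz_contents; apply/polyOverP => k.
    case: (ltnP k n.+1) => kn.
      by have := Hd (Ordinal kn); rewrite mxE.
    have : p`_k = 0 by rewrite coef_poly ltnNge kn.
    move=> pk; have : (g1`_k)%:~R = 0 :> rat by rewrite gE pk mulr0.
    by move/eqP; rewrite intr_eq0 => /eqP ->; apply: dvdz0.
  rewrite zcontents_primitive q'nz dvdz1 => /eqP H.
  by rewrite -abszE H.
Qed.

Section Aux.
Variables (R : realType) (m n : nat) (A : 'M[rat]_(m, n)).

Local Notation AR := (@Defs.realmx R m n A).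
Local Notation vec := 'cV[R]_(n + n).
Definition Lmx : 'M[R]_(n, n + n) := row_mx 1%:M (- 1%:M).

Lemma LmxE (y : vec) : Lmx *m y = usubmx y - dsubmx y.
Proof. by rewrite -{1}[y]vsubmxK /Lmx mul_row_col mul1mx mulNmx mul1mx. Qed.

Lemma coordP (y : vec) :
  (forall i, 0 <= usubmx y i 0) /\ (forall i, 0 <= dsubmx y i 0) <->
  (forall k, 0 <= y k 0).
Proof.
split.
  move=> [H1 H2] k; rewrite -(splitK k); case: (split k) => j /=.
    by have := H1 j; rewrite mxE.
  by have := H2 j; rewrite mxE.
by move=> H; split=> i; rewrite mxE.
Qed.

Lemma CAE (y : vec) : CA A y <-> (AR *m Lmx *m y = 0 /\ forall k, 0 <= y k 0).
Proof.
rewrite -mulmxA LmxE -coordP; split; first by case.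
by move=> [H [H1 H2]]; split.
Qed.

Lemma CA_ge0 (y : vec) : CA A y -> forall k, 0 <= y k 0.
Proof. by move/CAE=> []. Qed.

Lemma supp_sub p (y z : 'cV[R]_p) : (forall k, y k 0 = 0 -> z k 0 = 0) -> supp z \subset supp y.
Proof.
move=> H; apply/subsetP=> k; rewrite !inE; apply: contraNN => /eqP H1.
by rewrite H.
Qed.

Lemma argmin_ex k (P : {set 'I_k}) (F : 'I_k -> R) :
  P != set0 -> exists2 i, i \in P & forall j, j \in P -> F i <= F j.
Proof.
case/set0Pn=> i0 Hi0.
case: (@arg_minP _ _ _ i0 (mem P) F Hi0) => i Hi Hmin.
by exists i.
Qed.

Lemma suppE k (y : 'cV[R]_k) i : (i \in supp y) = (y i 0 != 0).
Proof. by rewrite /supp inE. Qed.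

Lemma supp0 k (y : 'cV[R]_k) : y != 0 -> supp y != set0.
Proof.
move=> nz; case/matrix0Pn: nz => i [j Hj]; rewrite (ord1 j) in Hj.
by apply/set0Pn; exists i; rewrite suppE.
Qed.

(* one step: subtract as much of z from y as possible *)
Lemma step (y z : vec) : CA A y -> CA A z -> z != 0 -> supp z \subset supp y ->
  exists mu : R, [/\ 0 < mu, CA A (y - mu *: z) & supp (y - mu *: z) \proper supp y].
Proof.
move=> Cy Cz nz sub.
have hy := CA_ge0 Cy; have hz := CA_ge0 Cz.
have [i Hi Hmin] := argmin_ex (fun k => y k 0 / z k 0) (supp0 nz).
have zpos k : k \in supp z -> 0 < z k 0.
  by rewrite suppE => H; rewrite lt_def H hz.
have Hiy : i \in supp y by apply: (subsetP sub).
have ypos : 0 < y i 0 by move: Hiy; rewrite suppE => H; rewrite lt_def H hy.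
have zi := zpos i Hi.
exists (y i 0 / z i 0); split.
- by rewrite divr_gt0.
- move: Cy Cz => /CAE [Ky _] /CAE [Kz _]; apply/CAE; split.
    by rewrite mulmxBr Ky -scalemxAr Kz scaler0 subr0.
  move=> k; rewrite !mxE subr_ge0.
  case: (boolP (k \in supp z)) => Hk.
    have zk := zpos k Hk; have H := Hmin k Hk.
    by rewrite -ler_pdivlMr.
  by move: Hk; rewrite suppE negbK => /eqP ->; rewrite mulr0 hy.
- apply/properP; split.
    apply: supp_sub => k yk; rewrite !mxE yk.
    have : k \notin supp z by apply/negP => /(subsetP sub); rewrite suppE yk eqxx.
    by rewrite suppE negbK => /eqP ->; rewrite mulr0 subr0.
  exists i => //; rewrite suppE negbK !mxE divfK ?subrr //.
  by rewrite gt_eqF.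
Qed.

Definition minimal (y : vec) :=
  [/\ CA A y, y != 0 & forall z : vec, CA A z -> z != 0 -> ~ supp z \proper supp y].

Lemma CA_scale (c : R) (y : vec) : 0 <= c -> CA A y -> CA A (c *: y).
Proof.
move=> c0 /CAE [K H]; apply/CAE; split; first by rewrite -scalemxAr K scaler0.
by move=> k; rewrite mxE mulr_ge0.
Qed.

Lemma CA_add (y z : vec) : CA A y -> CA A z -> CA A (y + z).
Proof.
move=> /CAE [K H] /CAE [K' H']; apply/CAE; split; first by rewrite mulmxDr K K' addr0.
by move=> k; rewrite mxE addr_ge0.
Qed.

Lemma CA0 : CA A (0 : vec).
Proof. by apply/CAE; split=> [|k]; rewrite ?mulmx0 // mxE. Qed.

Lemma supp_scale k (c : R) (y : 'cV[R]_k) : c != 0 -> supp (c *: y) = supp y.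
Proof. by move=> c0; apply/setP=> i; rewrite !suppE mxE mulf_eq0 negb_or c0. Qed.

Lemma min_prop (y z : vec) : minimal y -> CA A z -> supp z \subset supp y ->
  exists2 c, 0 <= c & z = c *: y.
Proof.
move=> [Cy nzy My] Cz sub.
case: (eqVneq z 0) => [->|nz]; first by exists 0; rewrite ?scale0r.
have [mu [mu0 Cw pw]] := step Cy Cz nz sub.
case: (eqVneq (y - mu *: z) 0) => [w0|wn]; last by case: (My _ Cw wn pw).
exists mu^-1; first by rewrite invr_ge0 ltW.
move/eqP: w0; rewrite subr_eq0 => /eqP ->.
by rewrite scalerA mulVf ?scale1r // gt_eqF.
Qed.

Lemma min_ext (y : vec) : minimal y -> extreme_dir (CA A) y.
Proof.
move=> My; have [Cy nzy _] := My; split => // u v Cu Cv uv.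
have hu := CA_ge0 Cu; have hv := CA_ge0 Cv.
have [su sv] : supp u \subset supp y /\ supp v \subset supp y.
  split; apply: supp_sub => k yk; move: (yk); rewrite -uv mxE => /eqP;
    rewrite paddr_eq0 // => /andP [/eqP ? /eqP ?] //.
have [a a0 ->] := min_prop My Cu su.
have [b b0 ->] := min_prop My Cv sv.
by exists a, b.
Qed.

Lemma ext_min (y : vec) : extreme_dir (CA A) y -> minimal y.
Proof.
move=> [nzy Cy E]; split => // z Cz nzz pz.
have [mu [mu0 Cw pw]] := step Cy Cz nzz (proper_sub pz).
have Cmz : CA A (mu *: z) by apply: CA_scale (ltW mu0) Cz.
have [a [b [_ _ _ Hb]]] := E _ _ Cw Cmz (subrK _ _).
have b0 : b != 0.
  apply: contraNneq nzz => b0; move: Hb; rewrite b0 scale0r => /eqP.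
  by rewrite scaler_eq0 gt_eqF // => /eqP.
move: pz; rewrite properE => /andP [_]; rewrite -(supp_scale z (lt0r_neq0 mu0)) Hb.
by rewrite supp_scale // subxx.
Qed.

Lemma gen_aux k : forall y : vec, (#|supp y| < k)%N -> CA A y ->
  exists s : seq (R * vec), (forall p, p \in s -> 0 <= p.1 /\ minimal p.2) /\
     y = \sum_(p <- s) p.1 *: p.2.
Proof.
elim: k => [//|k IH] y Hk Cy.
case: (eqVneq y 0) => [->|nz]; first by exists [::]; rewrite big_nil.
case: (classic (exists z : vec, [/\ CA A z, z != 0 & supp z \proper supp y])) =>
   [[z [Cz nzz pz]]|Hn]; last first.
  exists [:: (1, y)]; split; last by rewrite big_seq1 scale1r.
  move=> p; rewrite inE => /eqP -> /=; split => //; split => // z Cz nzz pz.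
  by apply: Hn; exists z.
have [mu [mu0 Cw pw]] := step Cy Cz nzz (proper_sub pz).
have [s1 [H1 E1]] := IH _ (leq_trans (proper_card pw) Hk) Cw.
have [s2 [H2 E2]] := IH _ (leq_trans (proper_card pz) Hk) Cz.
exists (s1 ++ [seq (mu * p.1, p.2) | p <- s2]); split.
  move=> p; rewrite mem_cat => /orP [/H1 //|/mapP [q /H2 [q0 mq] ->]] /=.
  by rewrite mulr_ge0 // ltW.
rewrite big_cat big_map /= -E1.
have -> : \sum_(p <- s2) (mu * p.1) *: p.2 = mu *: z.
  by rewrite E2 scaler_sumr; apply: eq_bigr => p _; rewrite scalerA.
by rewrite subrK.
Qed.

Lemma split_ind (P : 'I_(n + n) -> Prop) :
  (forall j, P (lshift n j)) -> (forall j, P (rshift n j)) -> forall k, P k.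
Proof. by move=> H1 H2 k; rewrite -(splitK k); case: (split k). Qed.

Definition pos (x : 'cV[R]_n) : 'cV[R]_n := \col_i Num.max (x i 0) 0.
Definition neg (x : 'cV[R]_n) : 'cV[R]_n := \col_i Num.max (- x i 0) 0.
Definition mk (x : 'cV[R]_n) : vec := col_mx (pos x) (neg x).

Lemma maxpn (a : R) : Num.max a 0 - Num.max (- a) 0 = a.
Proof.
case: (lerP 0 a) => h.
  by rewrite (max_idPr _) ?subr0 // oppr_le0.
rewrite (max_idPl _) ?opprK ?add0r //. by rewrite oppr_ge0 ltW.
Qed.

Lemma mkK (x : 'cV[R]_n) : usubmx (mk x) - dsubmx (mk x) = x.
Proof.
by rewrite col_mxKu col_mxKd; apply/matrixP=> i j; rewrite (ord1 j) !mxE maxpn.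
Qed.

Lemma mkl x j : mk x (lshift n j) 0 = Num.max (x j 0) 0.
Proof. by rewrite col_mxEu mxE. Qed.
Lemma mkr x j : mk x (rshift n j) 0 = Num.max (- x j 0) 0.
Proof. by rewrite col_mxEd mxE. Qed.

Lemma CA_mk x : AR *m x = 0 -> CA A (mk x).
Proof.
move=> K; apply/CAE; split; first by rewrite -mulmxA LmxE mkK.
by apply: split_ind => j; rewrite ?mkl ?mkr le_max lexx orbT.
Qed.

Lemma mk_eq0 x : (mk x == 0) = (x == 0).
Proof.
apply/eqP/eqP => [H|->]; first by rewrite -(mkK x) H; apply/matrixP=> i j; rewrite !mxE subr0.
by apply/matrixP; apply: split_ind => j i; rewrite (ord1 i) ?mkl ?mkr !mxE ?oppr0 maxxx.
Qed.

Lemma mk_scale (t : R) x : 0 < t -> mk (t *: x) = t *: mk x.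
Proof.
move=> t0; apply/matrixP; apply: split_ind => j i; rewrite (ord1 i).
  by rewrite mkl [RHS]mxE mkl mxE maxr_pMr ?ltW // mulr0.
by rewrite mkr [RHS]mxE mkr mxE -mulrN maxr_pMr ?ltW // mulr0.
Qed.

Lemma max0_neq0 (a : R) : (Num.max a 0 != 0) = (0 < a).
Proof.
case: (lerP 0 a) => h.
  by rewrite lt_def andbC h /=.
by rewrite eqxx lt_gtF.
Qed.

Definition ev (i : 'I_n) : 'cV[R]_n := \col_j (j == i)%:R.

Lemma tvecl (i j : 'I_n) : tvec R i (lshift n j) 0 = (j == i)%:R.
Proof. by rewrite /tvec col_mxEu mxE. Qed.
Lemma tvecr (i j : 'I_n) : tvec R i (rshift n j) 0 = (j == i)%:R.
Proof. by rewrite /tvec col_mxEd mxE. Qed.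

Lemma CA_tvec (i : 'I_n) : CA A (tvec R i).
Proof.
apply/CAE; split; first by rewrite -mulmxA LmxE /tvec col_mxKu col_mxKd subrr mulmx0.
by apply: split_ind => j; rewrite ?tvecl ?tvecr ler0n.
Qed.

Lemma tvec_neq0 (i : 'I_n) : tvec R i != 0.
Proof. by apply/eqP => /matrixP /(_ (lshift n i) 0); rewrite tvecl eqxx mxE => /eqP; rewrite oner_eq0. Qed.

Definition realmin (x : 'cV[R]_n) :=
  [/\ AR *m x = 0, x != 0 & forall w, AR *m w = 0 -> w != 0 -> ~ supp w \proper supp x].

Lemma tvec_min (i : 'I_n) : AR *m ev i != 0 -> minimal (tvec R i).
Proof.
move=> Hi; split; [exact: CA_tvec | exact: tvec_neq0 |] => z Cz nzz pz.
have sub := proper_sub pz.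
have zo k : tvec R i k 0 = 0 -> z k 0 = 0.
  move=> tk; apply/eqP; apply: contraT => zk.
  by have := subsetP sub k; rewrite !suppE tk eqxx zk => /(_ isT).
set a := z (lshift n i) 0; set b := z (rshift n i) 0.
have zl j : z (lshift n j) 0 = (j == i)%:R * a.
  case: (eqVneq j i) => [->|ji]; first by rewrite mul1r.
  by rewrite mul0r zo // tvecl (negbTE ji).
have zr j : z (rshift n j) 0 = (j == i)%:R * b.
  case: (eqVneq j i) => [->|ji]; first by rewrite mul1r.
  by rewrite mul0r zo // tvecr (negbTE ji).
have Ew : usubmx z - dsubmx z = (a - b) *: ev i.
  apply/matrixP => j k; rewrite (ord1 k) !mxE zl zr; case: (j == i); rewrite ?mul1r ?mul0r ?mulr1 ?mulr0 //.
  by rewrite subrr.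
move/CAE: Cz => [K _]; move: K; rewrite -mulmxA LmxE Ew -scalemxAr => /eqP.
rewrite scaler_eq0 (negbTE Hi) orbF subr_eq0 => /eqP ab.
case: (eqVneq a 0) => [a0|an0].
  apply/(negP nzz)/eqP/matrixP; apply: split_ind => j k; rewrite (ord1 k) mxE ?zl ?zr -?ab a0 mulr0 //.
move: pz; rewrite properE => /andP [_ /negP]; apply; apply/subsetP.
apply: split_ind => j; rewrite !suppE ?tvecl ?tvecr ?zl ?zr -?ab;
  by case: (j == i); rewrite ?mul1r ?eqxx.
Qed.

Lemma conf (a b c : R) : `|c| <= `|a / b| -> b != 0 ->
  (0 < a - c * b -> 0 < a) /\ (a - c * b < 0 -> a < 0).
Proof.
move=> H b0.
have H2 : `|c * b| <= `|a|.
  have -> : `|a| = `|a / b| * `|b| by rewrite -normrM divfK.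
  by rewrite normrM ler_wpM2r.
move: H2; rewrite ler_norml => /andP [h1 h2].
case: (lerP 0 a) => ha.
  rewrite ger0_norm // in h1 h2. split => h; lra.
rewrite ltr0_norm // in h1 h2. split => h; lra.
Qed.

Lemma mkl_neq0 x j : (mk x (lshift n j) 0 != 0) = (0 < x j 0).
Proof. by rewrite mkl max0_neq0. Qed.
Lemma mkr_neq0 x j : (mk x (rshift n j) 0 != 0) = (x j 0 < 0).
Proof. by rewrite mkr max0_neq0 oppr_gt0. Qed.

Lemma intvec_neq0 (g : 'cV[int]_n) : g != 0 -> intvec R g != 0.
Proof.
case/matrix0Pn => i [j Hj]; apply/matrix0Pn; exists i, j.
by rewrite mxE intr_eq0.
Qed.

Lemma circ_min (g : 'cV[int]_n) : @is_circuit R m n A g -> minimal (mk (intvec R g)).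
Proof.
case=> g0 K cop Mg; set x := intvec R g.
split; [exact: CA_mk | by rewrite mk_eq0 intvec_neq0 |] => z Cz nzz pz.
have sub := proper_sub pz.
have zl j : z (lshift n j) 0 != 0 -> 0 < x j 0.
  by move=> H; rewrite -mkl_neq0 -suppE; apply: (subsetP sub); rewrite suppE.
have zr j : z (rshift n j) 0 != 0 -> x j 0 < 0.
  by move=> H; rewrite -mkr_neq0 -suppE; apply: (subsetP sub); rewrite suppE.
have zlr j : z (lshift n j) 0 = 0 \/ z (rshift n j) 0 = 0.
  case: (eqVneq (z (lshift n j) 0) 0) => [|h1]; first by left.
  case: (eqVneq (z (rshift n j) 0) 0) => [|h2]; first by right.
  by have := lt_trans (zr _ h2) (zl _ h1); rewrite ltxx.
set w := usubmx z - dsubmx z.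
have wE j : w j 0 = z (lshift n j) 0 - z (rshift n j) 0 by rewrite !mxE.
have Kw : AR *m w = 0 by move/CAE: Cz => [Kz _]; rewrite -mulmxA LmxE in Kz.
have nzw : w != 0.
  case/matrix0Pn: nzz => k [i]; rewrite (ord1 i) -(splitK k).
  case: (split k) => j /= Hk; apply/matrix0Pn; exists j, 0; rewrite wE.
    case: (zlr j) => h; first by rewrite h eqxx in Hk.
    by rewrite h subr0.
  case: (zlr j) => h; last by rewrite h eqxx in Hk.
  by rewrite h sub0r oppr_eq0.
apply: (Mg w Kw nzw); apply/properP; split.
  apply: supp_sub => j xj; rewrite wE.
  have h1 : z (lshift n j) 0 = 0.
    by case: (eqVneq (z (lshift n j) 0) 0) => // /zl; rewrite xj ltxx.
  have h2 : z (rshift n j) 0 = 0.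
    by case: (eqVneq (z (rshift n j) 0) 0) => // /zr; rewrite xj ltxx.
  by rewrite h1 h2 subrr.
case/properP: pz => _ [k]; rewrite -(splitK k); case: (split k) => j /= Hx Hz;
  rewrite !suppE ?negbK in Hx Hz.
- have xp : 0 < x j 0 by rewrite -mkl_neq0.
  have zr0 : z (rshift n j) 0 = 0.
    by case: (eqVneq (z (rshift n j) 0) 0) => // /zr; rewrite ltNge ltW.
  exists j; rewrite !suppE ?wE; first by rewrite lt0r_neq0.
  by rewrite negbK (eqP Hz) zr0 subrr.
- have xp : x j 0 < 0 by rewrite -mkr_neq0.
  have zl0 : z (lshift n j) 0 = 0.
    by case: (eqVneq (z (lshift n j) 0) 0) => // /zl; rewrite ltNge ltW.
  exists j; rewrite !suppE ?wE; first by rewrite ltr0_neq0.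
  by rewrite negbK (eqP Hz) zl0 subrr.
Qed.

Lemma mk_realmin (x : 'cV[R]_n) : minimal (mk x) -> AR *m x = 0 -> x != 0 -> realmin x.
Proof.
move=> [Cy _ My] Kx nzx; split => // w Kw nzw pw.
have [i Hi Hmin] := argmin_ex (fun j => `|x j 0 / w j 0|) (supp0 nzw).
have subw := proper_sub pw.
have xi : x i 0 != 0 by rewrite -suppE; apply: (subsetP subw).
have wi : w i 0 != 0 by rewrite -suppE.
set mu := x i 0 / w i 0.
set x' := x - mu *: w.
have x'E j : x' j 0 = x j 0 - mu * w j 0 by rewrite !mxE.
have Kx' : AR *m x' = 0 by rewrite mulmxBr Kx -scalemxAr Kw scaler0 subr0.
have cf j : (0 < x' j 0 -> 0 < x j 0) /\ (x' j 0 < 0 -> x j 0 < 0).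
  rewrite x'E; case: (eqVneq (w j 0) 0) => [->|wj]; first by rewrite mulr0 subr0.
  by apply: (conf (Hmin j _) wj); rewrite suppE.
have x'i : x' i 0 = 0 by rewrite x'E /mu divfK // subrr.
have nzx' : x' != 0.
  case/properP: pw => _ [j Hj Hnj]; apply/matrix0Pn; exists j, 0.
  by rewrite x'E; rewrite suppE negbK in Hnj; rewrite (eqP Hnj) mulr0 subr0 -suppE.
apply: (My (mk x') (CA_mk Kx')); first by rewrite mk_eq0.
apply/properP; split.
  apply/subsetP; apply: split_ind => j; rewrite !suppE ?mkl_neq0 ?mkr_neq0;
    by case: (cf j).
case: (ltrgtP 0 (x i 0)) => h.
- by exists (lshift n i); rewrite !suppE ?mkl_neq0 // x'i ltxx.
- by exists (rshift n i); rewrite !suppE ?mkr_neq0 // x'i ltxx.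
- by rewrite h eqxx in xi.
Qed.

Lemma ratker (x : 'cV[R]_n) : AR *m x = 0 -> x != 0 ->
  exists q : 'cV[rat]_n, [/\ q != 0, A *m q = 0 & forall j, x j 0 = 0 -> q j 0 = 0].
Proof.
move=> Kx nzx.
pose D : 'M[rat]_n := diag_mx (\row_j ((x j 0 == 0)%:R : rat)).
pose M := col_mx A D.
have MR : map_mx (@ratr R) M *m x = 0.
  rewrite map_col_mx mul_col_mx Kx; apply/eqP; rewrite col_mx_eq0 eqxx /=.
  apply/eqP/matrixP => i j; rewrite (ord1 j) map_diag_mx mul_diag_mx !mxE rmorph_nat.
  by case: (eqVneq (x i 0) 0) => [->|_]; rewrite ?mulr0 ?mul0r.
have nf : ~~ row_free (M^T).
  rewrite -(row_free_map (@ratr R)) -map_trmx; apply/negP => rf.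
  have := mulmx_free_eq0 (x^T) rf; rewrite -trmx_mul MR trmx0 eqxx => /esym/eqP.
  by move/(congr1 trmx); rewrite trmxK trmx0; apply/eqP.
have : kermx (M^T) != 0 by rewrite kermx_eq0.
case/matrix0Pn => r [c Hrc].
pose q := (row r (kermx M^T))^T.
have Mq : M *m q = 0.
  apply: trmx_inj; rewrite trmx_mul trmxK -row_mul mulmx_ker trmx0.
  by apply/matrixP => i j; rewrite !mxE.
move: Mq; rewrite mul_col_mx => /eqP; rewrite col_mx_eq0 => /andP [/eqP Aq /eqP Dq].
exists q; split => //.
  by apply/matrix0Pn; exists c, 0; rewrite /q mxE [row _ _ _ _]mxE.
move=> j xj; move/matrixP: Dq => /(_ j 0); rewrite mul_diag_mx !mxE xj eqxx mul1r.
by move=> ->.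
Qed.

Lemma onedim (x v : 'cV[R]_n) : realmin x -> AR *m v = 0 -> v != 0 ->
  supp v \subset supp x -> exists t, x = t *: v.
Proof.
move=> [Kx nzx Mx] Kv nzv sub.
have [i Hi _] := argmin_ex (fun j => 0 : R) (supp0 nzv).
have vi : v i 0 != 0 by rewrite -suppE.
set t := x i 0 / v i 0; exists t.
case: (eqVneq (x - t *: v) 0) => [/eqP|nzw]; first by rewrite subr_eq0 => /eqP.
have Kw : AR *m (x - t *: v) = 0 by rewrite mulmxBr Kx -scalemxAr Kv scaler0 subr0.
case: (Mx _ Kw nzw); apply/properP; split.
  apply: supp_sub => j xj; rewrite !mxE xj.
  have : v j 0 = 0.
    by apply/eqP; apply: contraT => vj; have := subsetP sub j; rewrite !suppE vj xj eqxx => /(_ isT).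
  by move=> ->; rewrite mulr0 subrr.
exists i; first by apply: (subsetP sub).
by rewrite suppE negbK !mxE /t divfK // subrr.
Qed.

Lemma intvecN (g : 'cV[int]_n) : intvec R (- g) = - intvec R g.
Proof. by apply/matrixP => i j; rewrite !mxE intrN. Qed.

Lemma circN (g : 'cV[int]_n) : @is_circuit R m n A g -> @is_circuit R m n A (- g).
Proof.
case=> g0 K cop Mg; split.
- by rewrite oppr_eq0.
- by rewrite intvecN mulmxN K oppr0.
- move=> d Hd; apply: cop => i; have := Hd i; rewrite mxE.
  by rewrite !dvdzE abszN.
- move=> w Kw nzw; rewrite intvecN -scaleN1r supp_scale ?oppr_eq0 ?oner_eq0 //.
  exact: Mg.
Qed.

Lemma rat_circ (x : 'cV[R]_n) : realmin x ->
  exists g (t : R), [/\ @is_circuit R m n A g, 0 < t & x = t *: intvec R g].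
Proof.
move=> Hx; have [Kx nzx Mx] := Hx.
have [q [nzq Aq qs]] := ratker Kx nzx.
have [g [l [g0 l0 gE cop]]] := intscale nzq.
set v := intvec R g.
have vE : v = ratr l *: map_mx (@ratr R) q.
  apply/matrixP => i j; rewrite (ord1 j) !mxE -(ratr_int R) gE rmorphM.
  by [].
have Kv : AR *m v = 0.
  by rewrite vE -scalemxAr /Defs.realmx -map_mxM Aq map_mx0 scaler0.
have nzv : v != 0 by apply: intvec_neq0.
have sub : supp v \subset supp x.
  by apply: supp_sub => j xj; rewrite vE mxE mxE qs // rmorph0 mulr0.
have [t xE] := onedim Hx Kv nzv sub.
have t0 : t != 0 by apply: contraNneq nzx => t0; rewrite xE t0 scale0r.
have sE : supp v = supp x by rewrite xE supp_scale.
have cg : @is_circuit R m n A g.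
  split => // w Kw nzw; rewrite sE; exact: Mx.
case: (ltrgtP 0 t) => ht.
- by exists g, t.
- exists (- g), (- t); split; [exact: circN | by rewrite oppr_gt0 |].
  by rewrite intvecN scalerN scaleNr opprK.
- by rewrite ht eqxx in t0.
Qed.

Lemma maxab (a b : R) : 0 <= a -> 0 <= b -> a = 0 \/ b = 0 ->
  Num.max (a - b) 0 = a /\ Num.max (- (a - b)) 0 = b.
Proof.
move=> ha hb [->|->]; rewrite ?sub0r ?subr0 ?opprK ?oppr0; split.
- by apply/max_idPr; rewrite oppr_le0.
- by apply/max_idPl.
- by apply/max_idPl.
- by apply/max_idPr; rewrite oppr_le0.
Qed.

Lemma char_min (y : vec) : minimal y ->
  (exists g (t : R), [/\ @is_circuit R m n A g, 0 < t & y = t *: mk (intvec R g)]) \/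
  (exists i (t : R), [/\ AR *m ev i != 0, 0 < t & y = t *: tvec R i]).
Proof.
move=> H; have [Cy nzy My] := H; have hy := CA_ge0 Cy.
case: (classic (exists j, y (lshift n j) 0 != 0 /\ y (rshift n j) 0 != 0)) =>
  [[j [h1 h2]]|Hn].
  right.
  have sub : supp (tvec R j) \subset supp y.
    apply: supp_sub; apply: split_ind => j' yk; rewrite ?tvecl ?tvecr;
      case: (eqVneq j' j) => [e|ne]; rewrite ?(negbTE ne) //; subst j';
      by rewrite yk eqxx in h1 h2.
  have [c c0 tE] := min_prop H (CA_tvec j) sub.
  have cn0 : c != 0 by apply: contraNneq (tvec_neq0 j) => c0'; rewrite tE c0' scale0r.
  have cp : 0 < c by rewrite lt_def cn0 c0.
  exists j, c^-1; split.
  - apply/negP => /eqP Kj.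
    pose z : vec := col_mx (ev j) 0.
    have Cz : CA A z.
      apply/CAE; split.
        by rewrite -mulmxA LmxE /z col_mxKu col_mxKd subr0.
      by apply: split_ind => j'; rewrite /z ?col_mxEu ?col_mxEd !mxE ?ler0n.
    have subz : supp z \subset supp y.
      apply: supp_sub; apply: split_ind => j' yk; rewrite /z ?col_mxEu ?col_mxEd !mxE //.
      case: (eqVneq j' j) => [e|ne]; rewrite ?(negbTE ne) //; subst j'.
      by rewrite yk eqxx in h1.
    have [c' _ zE] := min_prop H Cz subz.
    move/matrixP: zE => zE.
    have := zE (rshift n j) 0; rewrite /z col_mxEd !mxE => /esym/eqP.
    rewrite mulf_eq0 (negbTE h2) orbF => /eqP c'0.
    have := zE (lshift n j) 0; rewrite /z col_mxEu !mxE c'0 mul0r eqxx.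
    by move/eqP; rewrite oner_eq0.
  - by rewrite invr_gt0.
  - by rewrite tE scalerA mulVf ?scale1r.
left.
have Hn' j : y (lshift n j) 0 = 0 \/ y (rshift n j) 0 = 0.
  case: (eqVneq (y (lshift n j) 0) 0) => [|h1]; first by left.
  case: (eqVneq (y (rshift n j) 0) 0) => [|h2]; first by right.
  by case: Hn; exists j.
set x := usubmx y - dsubmx y.
have yE : y = mk x.
  apply/matrixP; apply: split_ind => j i; rewrite (ord1 i) ?mkl ?mkr !mxE;
    by have [e1 e2] := maxab (hy _) (hy _) (Hn' j); rewrite ?e1 ?e2.
have Kx : AR *m x = 0 by move/CAE: Cy => [K _]; rewrite -mulmxA LmxE in K.
have nzx : x != 0 by rewrite -mk_eq0 -yE.
have Hm : realmin x by apply: mk_realmin => //; rewrite -yE.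
have [g [t [cg t0 xE]]] := rat_circ Hm.
by exists g, t; split => //; rewrite yE xE mk_scale.
Qed.

End Aux.

Theorem corollary2 (R : realType) (m n : nat) (A : 'M[rat]_(m, n)) :
  pointed (CA (R:=R) A) /\
  exists I : {set 'I_n},
    (#|I| <= n)%N /\
    let G := fun y : 'cV[R]_(n + n) => Svec A y \/ exists2 i, i \in I & y = tvec R i in
    [/\ cone_generated_by (CA (R:=R) A) G,
        (forall y, G y -> extreme_dir (CA (R:=R) A) y) &
        (forall d, extreme_dir (CA (R:=R) A) d ->
           exists y, G y /\ exists2 t : R, 0 < t & d = t *: y)].
Proof.
split.
  move=> y Cy Cny; apply/matrixP => k j; rewrite (ord1 j) mxE.
  have h1 := CA_ge0 Cy k; have h2 := CA_ge0 Cny k.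
  rewrite mxE oppr_ge0 in h2.
  by apply/le_anti; rewrite h1 h2.
exists [set i | @Defs.realmx R m n A *m ev R i != 0]; split.
  by apply: leq_trans (max_card _) _; rewrite card_ord.
set I := [set i | _].
move=> G.
have Gmin y : G y -> minimal A y.
  case=> [[g [cg ->]]|[i Hi ->]]; first exact: circ_min cg.
  by apply: tvec_min; rewrite inE in Hi.
have Gchar y : minimal A y -> exists w, G w /\ exists2 t : R, 0 < t & y = t *: w.
  move/char_min => [[g [t [cg t0 ->]]]|[i [t [Hi t0 ->]]]].
    by exists (mk (intvec R g)); split; [left; exists g | exists t].
  by exists (tvec R i); split; [right; exists i; rewrite ?inE | exists t].
split.
- move=> y Cy.
  have [s [Hs yE]] := gen_aux (ltnSn #|supp y|) Cy.
  have : exists s' : seq (R * 'cV[R]_(n + n)),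
      (forall p, p \in s' -> 0 <= p.1 /\ G p.2) /\
      \sum_(p <- s) p.1 *: p.2 = \sum_(p <- s') p.1 *: p.2.
    elim: s Hs {yE} => [|p s IH] Hs; first by exists [::].
    have IH1 : forall q, q \in s -> 0 <= q.1 /\ minimal A q.2.
      by move=> q qs; apply: Hs; rewrite inE qs orbT.
    have IH2 := Hs p (mem_head _ _).
    have [s' [Hs' E]] := IH IH1.
    have [w [Gw [t t0 dE]]] := Gchar _ IH2.2.
    exists ((p.1 * t, w) :: s'); split.
      move=> q; rewrite inE => /orP [/eqP -> /=|/Hs' //].
      by split => //; apply: mulr_ge0; [exact: IH2.1 | exact: ltW].
    by rewrite !big_cons E dE scalerA.
  move=> [s' [Hs' E]].
  exists (size s'), (fun j => (nth (0, 0) s' j).2), (fun j => (nth (0, 0) s' j).1).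
  split.
  + by move=> j; apply: (Hs' _ (mem_nth _ (ltn_ord j))).2.
  + by move=> j; apply: (Hs' _ (mem_nth _ (ltn_ord j))).1.
  + by rewrite yE E (big_nth (0, 0)) big_mkord.
- by move=> y /Gmin; apply: min_ext.
- by move=> d /ext_min /Gchar.
Qed.
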